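(* Let $Config=(R,F,M,I)$ be a configuration of legal rules and let $ASP_{Config}$ be its answer set program encoding (both defined in the context). Let $A_{Config}$ be any answer set (stable model) of $ASP_{Config}$, and let $S_{A_{Config}}$ be the set of all atoms of the forms $is\_legal(\cdot)$ and $legally\_valid(\cdot,\cdot)$ belonging to $A_{Config}$. Then $S_{A_{Config}}$ is a legal model of $Config$.
   Context: A configuration is a tuple $Config=(R,F,M,I)$ where: $R$ is a finite set of rules, each rule $r$ having a unique integer id (also denoted $r$), a precondition $pre\_con(r)$ which is a conjunction $b_1\wedge\dots\wedge b_m\wedge not\ b_{m+1}\wedge\dots\wedge not\ b_n$ of ground atoms and negation-as-failure literals, and a conclusion $C_r$ which is a single ground atom; $F$ is a finite set of ground atoms (facts); $M$ is a finite set of ground atoms of the forms $despite(r_i,r_j)$, $subject\_to(r_i,r_j)$, $strong\_subject\_to(r_i,r_j)$ with $r_i,r_j$ rule ids; $I$ is a finite collection of finite sets of ground atoms (''minimal inconsistent sets''), each containing at least 2 atoms. For a set $S$ of atoms, $S\models is\_legal(pre\_con(r))$ means: $is\_legal(b_i)\in S$ for every positive atom $b_i$ of $pre\_con(r)$ and $is\_legal(b_j)\notin S$ for every negated atom $not\ b_j$; for a set of atoms $A$, $is\_legal(A)=\{is\_legal(a): a\in A\}$. A set $S$ of atoms of the forms $is\_legal(c)$ and $legally\_valid(r,c)$ is a legal model of $Config$ iff: (A1) $is\_legal(f)\in S$ for all $f\in F$; (A2) for all $r\in R$, if $legally\_valid(r,C_r)\in S$ then $S\models is\_legal(pre\_con(r))$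 and $is\_legal(C_r)\in S$; (A3) for all $c$, if $is\_legal(c)\in S$ then $c\in F$ or there is $r\in R$ with $legally\_valid(r,C_r)\in S$ and $c=C_r$; (A4) for all $r_i,r_j\in R$, if $despite(r_i,r_j)\in M$ and $S\models is\_legal(pre\_con(r_j))$ then $legally\_valid(r_i,C_{r_i})\notin S$; (A5) for all $r_i,r_j\in R$, if $strong\_subject\_to(r_i,r_j)\in M$ and $legally\_valid(r_i,C_{r_i})\in S$ then $legally\_valid(r_j,C_{r_j})\notin S$; (A6) for all $r_i,r_j\in R$, if $subject\_to(r_i,r_j)\in M$, $legally\_valid(r_i,C_{r_i})\in S$, and there is $k\in I$ containing $C_{r_i}$ and $C_{r_j}$ as two distinct elements with $is\_legal(k\setminus\{C_{r_j}\})\subseteq S$, then $legally\_valid(r_j,C_{r_j})\notin S$; (A7) for all $r\in R$, if $S\models is\_legal(pre\_con(r))$ but $legally\_valid(r,C_r)\notin S$, then this exclusion is forced by one of (A4)–(A6), i.e. there is $r'\in R$ such that either $despite(r,r')\in M$ and $S\models is\_legal(pre\_con(r'))$; or $strong\_subject\_to(r',r)\in M$ and $legally\_valid(r',C_{r'})\in S$; or $subject\_to(r',r)\in M$, $legally\_valid(r',C_{r'})\in S$ and some $k\in I$ contains $C_{r'}$ and $C_r$ as distinct elements with $is\_legal(k\setminus\{C_r\})\subseteq S$. The program $ASP_{Config}$ (atoms of the configuration are used as ground terms; $R,C,R1,C1,X,Y$ are variables; $not$ is negation as failure) consists of: the fact $is\_legal(f).$ for each $f\in F$; each element of $M$ as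 a fact; for each rule $r$ with $pre\_con(r)=b_1\wedge\dots\wedge b_m\wedge not\ b_{m+1}\wedge\dots\wedge not\ b_n$ the rule $according\_to(r,C_r)\leftarrow is\_legal(b_1),\dots,is\_legal(b_m),not\ is\_legal(b_{m+1}),\dots,not\ is\_legal(b_n).$; for each $k=\{a_1,\dots,a_n\}\in I$ and each $1\le i<j\le n$ the rule $opposes(a_i,a_j)\leftarrow is\_legal(a_l)$ for all $l\notin\{i,j\}$; and the rules $opposes(X,Y)\leftarrow opposes(Y,X).$ $defeated(R,C,R1)\leftarrow according\_to(R,C),according\_to(R1,C1),despite(R,R1).$ $defeated(R,C,R1)\leftarrow according\_to(R,C),legally\_valid(R1,C1),opposes(C,C1),subject\_to(R1,R).$ $defeated(R,C,R1)\leftarrow according\_to(R,C),legally\_valid(R1,C1),strong\_subject\_to(R1,R).$ $not\_legally\_valid(R)\leftarrow defeated(R,C,R1).$ $legally\_valid(R,C)\leftarrow according\_to(R,C),not\ not\_legally\_valid(R).$ $is\_legal(C)\leftarrow legally\_valid(R,C).$ Answer sets are the stable models of (the ground instantiation of) this program under the standard stable model semantics. *)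

(* Defs.v *)
From Stdlib Require Import List ZArith.
Import ListNotations.
Set Implicit Arguments.

Section Defs.
Variable Atom : Type.

(* A rule: unique integer id, precondition b1..bm /\ not b(m+1) .. not bn,
   single-atom conclusion. *)
Record rule := mkRule { rid : Z; rpos : list Atom; rneg : list Atom; rconc : Atom }.

Inductive meta :=
| Despite (ri rj : Z) | SubjectTo (ri rj : Z) | StrongSubjectTo (ri rj : Z).

Record config := mkConfig {
  cR : list rule;
  cF : list Atom;
  cM : list meta;
  cI : list (list Atom) }.      (* minimal inconsistent sets *)

Definition wf_config (c : config) : Prop :=
  NoDup (map rid (cR c)) /\
  (forall k, In k (cI c) -> NoDup k /\ 2 <= length k).

Inductive term := TR (n : Z) | TA (a : Atom).

Inductive gatom :=
| g_is_legal (c : term)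
| g_legally_valid (r c : term)
| g_according_to (r c : term)
| g_opposes (x y : term)
| g_defeated (r c r1 : term)
| g_not_legally_valid (r : term)
| g_despite (ri rj : term)
| g_subject_to (ri rj : term)
| g_strong_subject_to (ri rj : term).

Record grule := GR { ghead : gatom; gpos : list gatom; gneg : list gatom }.

Definition isl (a : Atom) : gatom := g_is_legal (TA a).

Definition meta_atom (m : meta) : gatom :=
  match m with
  | Despite i j => g_despite (TR i) (TR j)
  | SubjectTo i j => g_subject_to (TR i) (TR j)
  | StrongSubjectTo i j => g_strong_subject_to (TR i) (TR j)
  end.

Inductive asp_program (c : config) : grule -> Prop :=
| ap_fact : forall f, In f (cF c) -> asp_program c (GR (isl f) [] [])
| ap_meta : forall m, In m (cM c) -> asp_program c (GR (meta_atom m) [] [])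
| ap_rule : forall r, In r (cR c) ->
    asp_program c (GR (g_according_to (TR (rid r)) (TA (rconc r)))
                      (map isl (rpos r)) (map isl (rneg r)))
| ap_opp : forall pre ai mid aj post,
    In (pre ++ ai :: mid ++ aj :: post) (cI c) ->
    asp_program c (GR (g_opposes (TA ai) (TA aj)) (map isl (pre ++ mid ++ post)) [])
| ap_sym : forall X Y, asp_program c (GR (g_opposes X Y) [g_opposes Y X] [])
| ap_def1 : forall R C R1 C1,
    asp_program c (GR (g_defeated R C R1)
                      [g_according_to R C; g_according_to R1 C1; g_despite R R1] [])
| ap_def2 : forall R C R1 C1,
    asp_program c (GR (g_defeated R C R1)
                      [g_according_to R C; g_legally_valid R1 C1; g_opposes C C1;
                       g_subject_to R1 R] [])
| ap_def3 : forall R C R1 C1,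
    asp_program c (GR (g_defeated R C R1)
                      [g_according_to R C; g_legally_valid R1 C1;
                       g_strong_subject_to R1 R] [])
| ap_nlv : forall R C R1,
    asp_program c (GR (g_not_legally_valid R) [g_defeated R C R1] [])
| ap_lv : forall R C,
    asp_program c (GR (g_legally_valid R C) [g_according_to R C] [g_not_legally_valid R])
| ap_il : forall R C,
    asp_program c (GR (g_is_legal C) [g_legally_valid R C] []).

(* M is closed under the Gelfond-Lifschitz reduct of P w.r.t. S. *)
Definition reduct_closed (P : grule -> Prop) (S M : gatom -> Prop) : Prop :=
  forall r, P r -> (forall b, In b (gneg r) -> ~ S b) ->
  (forall b, In b (gpos r) -> M b) -> M (ghead r).

Definition answer_set (P : grule -> Prop) (S : gatom -> Prop) : Prop :=
  reduct_closed P S S /\ (forall M, reduct_closed P S M -> forall a, S a -> M a).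

Definition is_il_or_lv (a : gatom) : Prop :=
  match a with
  | g_is_legal _ | g_legally_valid _ _ => True
  | _ => False
  end.

Definition S_of (A : gatom -> Prop) : gatom -> Prop := fun a => A a /\ is_il_or_lv a.

Definition sat_pre (S : gatom -> Prop) (r : rule) : Prop :=
  (forall b, In b (rpos r) -> S (isl b)) /\ (forall b, In b (rneg r) -> ~ S (isl b)).

Definition lv (S : gatom -> Prop) (r : rule) : Prop :=
  S (g_legally_valid (TR (rid r)) (TA (rconc r))).

Definition opp_cond (c : config) (S : gatom -> Prop) (ci cj : Atom) : Prop :=
  exists k, In k (cI c) /\ In ci k /\ In cj k /\ ci <> cj /\
            (forall a, In a k -> a <> cj -> S (isl a)).

Definition legal_model (c : config) (S : gatom -> Prop) : Prop :=
  (forall a, S a -> is_il_or_lv a) /\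
  (forall f, In f (cF c) -> S (isl f)) /\
  (forall r, In r (cR c) -> lv S r -> sat_pre S r /\ S (isl (rconc r))) /\
  (forall t, S (g_is_legal t) ->
     (exists f, In f (cF c) /\ t = TA f) \/
     (exists r, In r (cR c) /\ lv S r /\ t = TA (rconc r))) /\
  (forall ri rj, In ri (cR c) -> In rj (cR c) ->
     In (Despite (rid ri) (rid rj)) (cM c) -> sat_pre S rj -> ~ lv S ri) /\
  (forall ri rj, In ri (cR c) -> In rj (cR c) ->
     In (StrongSubjectTo (rid ri) (rid rj)) (cM c) -> lv S ri -> ~ lv S rj) /\
  (forall ri rj, In ri (cR c) -> In rj (cR c) ->
     In (SubjectTo (rid ri) (rid rj)) (cM c) -> lv S ri ->
     opp_cond c S (rconc ri) (rconc rj) -> ~ lv S rj) /\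
  (forall r, In r (cR c) -> sat_pre S r -> ~ lv S r ->
     exists r', In r' (cR c) /\
       ((In (Despite (rid r) (rid r')) (cM c) /\ sat_pre S r') \/
        (In (StrongSubjectTo (rid r') (rid r)) (cM c) /\ lv S r') \/
        (In (SubjectTo (rid r') (rid r)) (cM c) /\ lv S r' /\
         opp_cond c S (rconc r') (rconc r)))).

End Defs.

(* Main.v *)
Require Import Defs.
From Stdlib Require Import List ZArith.
Import ListNotations.

Lemma support {Atom : Type} {c : config Atom} {A : gatom Atom -> Prop} {a} :
  answer_set (asp_program c) A -> A a ->
  exists r, asp_program c r /\ ghead r = a /\ (forall b, In b (gpos r) -> A b)
            /\ (forall b, In b (gneg r) -> ~ A b).
Proof.
  intros [Hcl Hmin] Ha.
  refine (proj2 (Hmin (fun a => A a /\ exists r, asp_program c r /\ ghead r = a /\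
     (forall b, In b (gpos r) -> A b) /\ (forall b, In b (gneg r) -> ~ A b)) _ a Ha)).
  intros r Hr Hneg Hpos. split.
  - apply Hcl; auto. intros b hb; apply (proj1 (Hpos b hb)).
  - exists r; repeat split; auto. intros b hb; apply (proj1 (Hpos b hb)).
Qed.

Lemma nodup_id (Atom : Type) (rs : list (rule Atom)) r1 r2 :
  NoDup (map (@rid Atom) rs) -> In r1 rs -> In r2 rs -> rid r1 = rid r2 -> r1 = r2.
Proof.
  induction rs as [|x rs IH]; simpl; intros Hn H1 H2 He; [contradiction|].
  inversion Hn as [|? ? Hnot Hn']; subst.
  destruct H1 as [<-|H1]; destruct H2 as [<-|H2]; auto.
  - exfalso; apply Hnot; rewrite He; apply in_map; auto.
  - exfalso; apply Hnot; rewrite <- He; apply in_map; auto.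
Qed.

Definition oppQ {Atom : Type} (c : config Atom) (A : gatom Atom -> Prop) (X Y : term Atom) :=
  exists pre ai mid aj post, In (pre ++ ai :: mid ++ aj :: post) (cI c) /\
    (forall a, In a (pre ++ mid ++ post) -> A (isl a)) /\
    ((X = TA ai /\ Y = TA aj) \/ (X = TA aj /\ Y = TA ai)).

Lemma opp_support {Atom : Type} {c : config Atom} {A : gatom Atom -> Prop} X Y :
  answer_set (asp_program c) A -> A (g_opposes X Y) -> oppQ c A X Y.
Proof.
  intros [Hcl Hmin] Ha.
  refine (proj2 (Hmin (fun a => A a /\ match a with g_opposes X Y => oppQ c A X Y | _ => True end) _ _ Ha)).
  intros r Hr Hneg Hpos. split.
  - apply Hcl; auto. intros b hb; apply (proj1 (Hpos b hb)).
  - destruct Hr; simpl in *; try (destruct m; simpl; auto); auto.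
    + unfold oppQ; do 5 eexists; split; [eassumption|]; split; [|left; auto].
      intros a0 h0. apply (proj1 (Hpos (isl a0) (in_map _ _ _ h0))).
    + destruct (proj2 (Hpos _ (or_introl eq_refl))) as (pre & ai & mid & aj & post & H1 & H2 & H3).
      exists pre, ai, mid, aj, post; repeat split; auto. tauto.
Qed.

Lemma split2 (Atom : Type) (k : list Atom) x y :
  In x k -> In y k -> x <> y ->
  exists pre mid post, (k = pre ++ x :: mid ++ y :: post) \/ (k = pre ++ y :: mid ++ x :: post).
Proof.
  intros Hx Hy Hxy.
  destruct (in_split _ _ Hx) as (l1 & l2 & ->).
  apply in_app_or in Hy. destruct Hy as [Hy|[Hy|Hy]].
  - destruct (in_split _ _ Hy) as (m1 & m2 & ->).
    exists m1, m2, l2; right. rewrite <- app_assoc. reflexivity.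
  - congruence.
  - destruct (in_split _ _ Hy) as (m1 & m2 & ->).
    exists l1, m1, m2; left; reflexivity.
Qed.

Lemma nodup_rest (Atom : Type) pre (x : Atom) mid y post :
  NoDup (pre ++ x :: mid ++ y :: post) ->
  x <> y /\ ~ In x (pre ++ mid ++ post) /\ ~ In y (pre ++ mid ++ post).
Proof.
  intros H.
  pose proof (NoDup_remove_2 _ _ _ H) as H1.
  assert (H' : NoDup ((pre ++ x :: mid) ++ y :: post)) by (rewrite <- app_assoc; exact H).
  pose proof (NoDup_remove_2 _ _ _ H') as H2.
  repeat split.
  - intros ->. apply H1. apply in_or_app; right; apply in_or_app; right; left; auto.
  - intros Hin; apply H1. apply in_app_or in Hin; destruct Hin as [h|h]; apply in_or_app; auto.
    right; apply in_app_or in h; destruct h as [h|h]; apply in_or_app; auto. right; right; auto.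
  - intros Hin; apply H2. apply in_app_or in Hin; destruct Hin as [h|h].
    + apply in_or_app; left; apply in_or_app; auto.
    + apply in_app_or in h; destruct h as [h|h].
      * apply in_or_app; left; apply in_or_app; right; right; auto.
      * apply in_or_app; auto.
Qed.


Lemma L_acc {Atom : Type} {c : config Atom} {A : gatom Atom -> Prop} R C :
  answer_set (asp_program c) A -> A (g_according_to R C) ->
  exists r, In r (cR c) /\ R = TR Atom (rid r) /\ C = TA (rconc r) /\ sat_pre (S_of A) r.
Proof.
  intros HA Ha. destruct (support HA Ha) as (r & Hr & Hh & Hp & Hn).
  destruct Hr; simpl in *; try (destruct m; discriminate); try discriminate.
  injection Hh; intros; subst. exists r; repeat split; auto.
  - apply Hp. apply in_map; auto.
  - intros x hx [hx' _]. apply (Hn (isl x)); auto. apply in_map; auto.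
Qed.

Lemma L_lv {Atom : Type} {c : config Atom} {A : gatom Atom -> Prop} R C :
  answer_set (asp_program c) A -> A (g_legally_valid R C) ->
  A (g_according_to R C) /\ ~ A (g_not_legally_valid R).
Proof.
  intros HA Ha. destruct (support HA Ha) as (r & Hr & Hh & Hp & Hn).
  destruct Hr; simpl in *; try (destruct m; discriminate); try discriminate.
  injection Hh; intros; subst. auto.
Qed.

Lemma L_il {Atom : Type} {c : config Atom} {A : gatom Atom -> Prop} t :
  answer_set (asp_program c) A -> A (g_is_legal t) ->
  (exists f, In f (cF c) /\ t = TA f) \/ (exists R, A (g_legally_valid R t)).
Proof.
  intros HA Ha. destruct (support HA Ha) as (r & Hr & Hh & Hp & Hn).
  destruct Hr; simpl in *; try (destruct m; discriminate); try discriminate.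
  - injection Hh; intros; subst. left; eauto.
  - injection Hh; intros; subst. right; eauto.
Qed.

Lemma L_nlv {Atom : Type} {c : config Atom} {A : gatom Atom -> Prop} R :
  answer_set (asp_program c) A -> A (g_not_legally_valid R) ->
  exists C R1, A (g_defeated R C R1).
Proof.
  intros HA Ha. destruct (support HA Ha) as (r & Hr & Hh & Hp & Hn).
  destruct Hr; simpl in *; try (destruct m; discriminate); try discriminate.
  injection Hh; intros; subst. eauto.
Qed.

Lemma L_def {Atom : Type} {c : config Atom} {A : gatom Atom -> Prop} R C R1 :
  answer_set (asp_program c) A -> A (g_defeated R C R1) ->
  (exists C1, A (g_according_to R C) /\ A (g_according_to R1 C1) /\ A (g_despite R R1)) \/
  (exists C1, A (g_according_to R C) /\ A (g_legally_valid R1 C1) /\ A (g_opposes C C1)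
              /\ A (g_subject_to R1 R)) \/
  (exists C1, A (g_according_to R C) /\ A (g_legally_valid R1 C1) /\ A (g_strong_subject_to R1 R)).
Proof.
  intros HA Ha. destruct (support HA Ha) as (r & Hr & Hh & Hp & Hn).
  destruct Hr; simpl in *; try (destruct m; discriminate); try discriminate;
  injection Hh; intros; subst.
  - left. exists C1; repeat split; apply Hp; simpl; tauto.
  - right; left. exists C1; repeat split; apply Hp; simpl; tauto.
  - right; right. exists C1; repeat split; apply Hp; simpl; tauto.
Qed.

Lemma L_desp {Atom : Type} {c : config Atom} {A : gatom Atom -> Prop} R R1 :
  answer_set (asp_program c) A -> A (g_despite R R1) ->
  exists i j, In (Despite i j) (cM c) /\ R = TR Atom i /\ R1 = TR Atom j.
Proof.
  intros HA Ha. destruct (support HA Ha) as (r & Hr & Hh & Hp & Hn).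
  destruct Hr; simpl in *; try discriminate.
  destruct m; simpl in Hh; try discriminate. injection Hh; intros; subst. eauto.
Qed.

Lemma L_sub {Atom : Type} {c : config Atom} {A : gatom Atom -> Prop} R R1 :
  answer_set (asp_program c) A -> A (g_subject_to R R1) ->
  exists i j, In (SubjectTo i j) (cM c) /\ R = TR Atom i /\ R1 = TR Atom j.
Proof.
  intros HA Ha. destruct (support HA Ha) as (r & Hr & Hh & Hp & Hn).
  destruct Hr; simpl in *; try discriminate.
  destruct m; simpl in Hh; try discriminate. injection Hh; intros; subst. eauto.
Qed.

Lemma L_sst {Atom : Type} {c : config Atom} {A : gatom Atom -> Prop} R R1 :
  answer_set (asp_program c) A -> A (g_strong_subject_to R R1) ->
  exists i j, In (StrongSubjectTo i j) (cM c) /\ R = TR Atom i /\ R1 = TR Atom j.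
Proof.
  intros HA Ha. destruct (support HA Ha) as (r & Hr & Hh & Hp & Hn).
  destruct Hr; simpl in *; try discriminate.
  destruct m; simpl in Hh; try discriminate. injection Hh; intros; subst. eauto.
Qed.

Lemma in_k_cases (Atom : Type) pre (ai : Atom) mid aj post a :
  In a (pre ++ ai :: mid ++ aj :: post) -> a = ai \/ a = aj \/ In a (pre ++ mid ++ post).
Proof.
  intros h. apply in_app_or in h as [h|[h|h]].
  - right; right; apply in_or_app; auto.
  - left; auto.
  - apply in_app_or in h as [h|[h|h]].
    + right; right; apply in_or_app; right; apply in_or_app; auto.
    + right; left; auto.
    + right; right; apply in_or_app; right; apply in_or_app; auto.
Qed.

Lemma in_rest_k (Atom : Type) pre (ai : Atom) mid aj post a :
  In a (pre ++ mid ++ post) -> In a (pre ++ ai :: mid ++ aj :: post).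
Proof.
  intros h. apply in_app_or in h as [h|h]; apply in_or_app; auto.
  right; right. apply in_app_or in h as [h|h]; apply in_or_app; simpl; auto.
Qed.

Lemma in_ai_k (Atom : Type) pre (ai : Atom) mid aj post :
  In ai (pre ++ ai :: mid ++ aj :: post) /\ In aj (pre ++ ai :: mid ++ aj :: post).
Proof.
  split; apply in_or_app; right; simpl; auto. right; apply in_or_app; simpl; auto.
Qed.

From Stdlib Require Import Classical.

Theorem lemma4 (Atom : Type) (c : config Atom) (A : gatom Atom -> Prop) :
  wf_config c -> answer_set (asp_program c) A -> legal_model c (S_of A).
Proof.
  intros [Hnd HI] HA. pose proof HA as [Hcl _].
  assert (Hacc: forall r, In r (cR c) -> sat_pre (S_of A) r ->
            A (g_according_to (TR Atom (rid r)) (TA (rconc r)))).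
  { intros r Hr [Hp Hn]. apply (Hcl _ (ap_rule c r Hr)); simpl.
    - intros b hb. apply in_map_iff in hb as (x & <- & hx). intros h.
      apply (Hn x hx). split; [exact h|exact I].
    - intros b hb. apply in_map_iff in hb as (x & <- & hx). apply (Hp x hx). }
  assert (Hlvil: forall R C, A (g_legally_valid R C) -> A (g_is_legal C)).
  { intros R C h. apply (Hcl _ (ap_il c R C)); simpl; [tauto| intros b [<-|[]]; auto]. }
  assert (Hlvrule: forall r, In r (cR c) -> lv (S_of A) r -> sat_pre (S_of A) r).
  { intros r Hr [h _]. destruct (L_lv _ _ HA h) as [ha _].
    destruct (L_acc _ _ HA ha) as (r' & Hr' & e1 & e2 & hs).
    injection e1; intro e. assert (r = r') by (apply (nodup_id Atom (cR c)); auto).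
    subst; auto. }
  assert (Hnlv: forall R C R1 C', A (g_defeated R C R1) -> ~ A (g_legally_valid R C')).
  { intros R C R1 C' hd hl. destruct (L_lv _ _ HA hl) as [_ hn]. apply hn.
    apply (Hcl _ (ap_nlv c R C R1)); simpl; [tauto| intros b [<-|[]]; auto]. }
  assert (Hmeta: forall m, In m (cM c) -> A (meta_atom Atom m)).
  { intros m hm; apply (Hcl _ (ap_meta c m hm)); simpl; tauto. }
  assert (Hopp: forall ci cj, opp_cond c (S_of A) ci cj -> A (g_opposes (TA cj) (TA ci))).
  { intros ci cj (k & hk & hi & hj & hne & hall).
    destruct (split2 Atom k ci cj hi hj hne) as (pre & mid & post & [e|e]); subst k;
    destruct (HI _ hk) as [hnd _]; destruct (nodup_rest Atom _ _ _ _ _ hnd) as (_ & n1 & n2).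
    - apply (Hcl _ (ap_sym c (TA cj) (TA ci))); simpl; [tauto|]. intros b [<-|[]].
      apply (Hcl _ (ap_opp c pre ci mid cj post hk)); simpl; [tauto|].
      intros b hb. apply in_map_iff in hb as (x & <- & hx). apply (hall x).
      + apply in_rest_k; auto.
      + intros ->; contradiction (n2 hx).
    - apply (Hcl _ (ap_opp c pre cj mid ci post hk)); simpl; [tauto|].
      intros b hb. apply in_map_iff in hb as (x & <- & hx). apply (hall x).
      + apply in_rest_k; auto.
      + intros ->; contradiction (n1 hx). }
  split; [intros a [_ h]; exact h|].
  split.
  { intros f hf; split; [apply (Hcl _ (ap_fact c f hf)); simpl; tauto | exact I]. }
  split.
  { intros r hr hlv; split; [auto|]. split; [apply (Hlvil _ _ (proj1 hlv))|exact I]. }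
  split.
  { intros t [ht _]. destruct (L_il _ HA ht) as [h|(R & h)]; [left; auto|right].
    destruct (L_lv _ _ HA h) as [ha _]; destruct (L_acc _ _ HA ha) as (r & hr & e1 & e2 & _).
    subst. exists r; repeat split; auto. }
  split.
  { intros ri rj hi hj hd hs [hl _].
    refine (Hnlv _ (TA (rconc ri)) (TR Atom (rid rj)) _ _ hl).
    apply (Hcl _ (ap_def1 c (TR Atom (rid ri)) (TA (rconc ri)) (TR Atom (rid rj)) (TA (rconc rj))));
      simpl; [tauto|]. intros b [<-|[<-|[<-|[]]]].
    - destruct (L_lv _ _ HA hl); auto.
    - apply Hacc; auto.
    - apply (Hmeta _ hd). }
  split.
  { intros ri rj hi hj hd [hli _] [hlj _].
    refine (Hnlv _ (TA (rconc rj)) (TR Atom (rid ri)) _ _ hlj).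
    apply (Hcl _ (ap_def3 c (TR Atom (rid rj)) (TA (rconc rj)) (TR Atom (rid ri)) (TA (rconc ri))));
      simpl; [tauto|]. intros b [<-|[<-|[<-|[]]]].
    - destruct (L_lv _ _ HA hlj); auto.
    - auto.
    - apply (Hmeta _ hd). }
  split.
  { intros ri rj hi hj hd [hli _] hoc [hlj _].
    refine (Hnlv _ (TA (rconc rj)) (TR Atom (rid ri)) _ _ hlj).
    apply (Hcl _ (ap_def2 c (TR Atom (rid rj)) (TA (rconc rj)) (TR Atom (rid ri)) (TA (rconc ri))));
      simpl; [tauto|]. intros b [<-|[<-|[<-|[<-|[]]]]].
    - destruct (L_lv _ _ HA hlj); auto.
    - auto.
    - apply Hopp; auto.
    - apply (Hmeta _ hd). }
  intros r hr hs hnl.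
  pose proof (Hacc r hr hs) as hacc.
  assert (hn : A (g_not_legally_valid (TR Atom (rid r)))).
  { destruct (classic (A (g_not_legally_valid (TR Atom (rid r))))) as [h|h]; auto.
    exfalso; apply hnl. split; [|exact I].
    apply (Hcl _ (ap_lv c (TR Atom (rid r)) (TA (rconc r)))); simpl.
    - intros b [<-|[]]; auto.
    - intros b [<-|[]]; auto. }
  destruct (L_nlv _ HA hn) as (C & R1 & hd).
  destruct (L_def _ _ _ HA hd) as [(C1 & h1 & h2 & h3)|[(C1 & h1 & h2 & h3 & h4)|(C1 & h1 & h2 & h3)]].
  - destruct (L_desp _ _ HA h3) as (i & j & hm & e1 & e2).
    destruct (L_acc _ _ HA h2) as (r' & hr' & e3 & e4 & hs').
    subst; repeat match goal with H : TR _ _ = TR _ _ |- _ => injection H; clear H; intros end; subst.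
    exists r'; split; auto.
  - destruct (L_sub _ _ HA h4) as (i & j & hm & e1 & e2).
    destruct (L_lv _ _ HA h2) as [h2a _].
    destruct (L_acc _ _ HA h2a) as (r' & hr' & e3 & e4 & hs').
    destruct (L_acc _ _ HA h1) as (r'' & hr'' & e5 & e6 & _).
    injection e5; intro e7.
    assert (r = r'') by (apply (nodup_id Atom (cR c)); auto). subst r''.
    subst; repeat match goal with H : TR _ _ = TR _ _ |- _ => injection H; clear H; intros end; subst.
    exists r'; split; auto. right; right. split; [auto|split; [split; [exact h2|exact I]|]].
    destruct (opp_support _ _ HA h3) as (pre & ai & mid & aj & post & hk & hrest & hor).
    destruct (HI _ hk) as [hnd _]; destruct (nodup_rest Atom _ _ _ _ _ hnd) as (hne & n1 & n2).
    destruct (in_ai_k Atom pre ai mid aj post) as [ia ib].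
    assert (hlr' : A (isl (rconc r'))) by (apply (Hlvil _ _ h2)).
    exists (pre ++ ai :: mid ++ aj :: post).
    destruct hor as [[ea eb]|[ea eb]]; injection ea; injection eb; intros e8 e9;
      rewrite <- e8 in *; rewrite <- e9 in *;
      refine (conj hk (conj _ (conj _ (conj _ _)))); auto;
      intros a ha hne'; split; try exact I;
      destruct (in_k_cases Atom _ _ _ _ _ _ ha) as [->|[->|hh]]; auto; congruence.
  - destruct (L_sst _ _ HA h3) as (i & j & hm & e1 & e2).
    destruct (L_lv _ _ HA h2) as [h2a _].
    destruct (L_acc _ _ HA h2a) as (r' & hr' & e3 & e4 & hs').
    subst; repeat match goal with H : TR _ _ = TR _ _ |- _ => injection H; clear H; intros end; subst.
    exists r'; split; auto. right; left. split; auto. split; [exact h2|exact I].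
Qed.
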